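(* Consider the statements: (i) there exists no scalable acceptable deal; (ii) $\mathcal L$ is a linear subspace of $\mathbb R^N$; (iii) $\mathcal L=\{0\}$. Then (iii) implies (i). If $\ker(V_1):=\{x\in\mathbb R^N: V_1(x)=0\}=\{0\}$, then (i) implies (iii). If $\mathcal A^\infty\cap(-\mathcal A^\infty)=\{0\}$, then (ii) implies (i).
   Context: Standing setup: Let $\mathcal{X}$ be a real topological vector space partially ordered by a convex cone $\mathcal{X}_+\subset\mathcal X$; write $X\ge Y$ iff $X-Y\in\mathcal X_+$. Fix $N\in\mathbb N$ and: a set $\mathcal P\subset\mathbb R^N$ with $0\in\mathcal P$; a function $V_0:\mathbb R^N\to\mathbb R$ with $V_0(0)=0$ and $V_0(x)\ge -V_0(-x)$ for all $x\in\mathbb R^N$; a map $V_1:\mathbb R^N\to\mathcal X$ with $V_1(0)=0$ and $V_1(x)\le -V_1(-x)$ for all $x\in\mathbb R^N$; a set $\mathcal A\subset\mathcal X$ with $0\in\mathcal A$ and $\mathcal A+\mathcal X_+\subset\mathcal A$. Asymptotic notions: for a nonempty set $C$ in a topological vector space, $C^\infty=\{X:\exists\text{ nets }(X_\alpha)\subset C,\ (\lambda_\alpha)\subset[0,\infty),\ \lambda_\alpha\to0,\ \lambda_\alpha X_\alpha\to X\}$. For $f:\mathbb R^N\to\mathbb R$, its asymptotic function $f^\infty:\mathbb R^N\to[-\infty,\infty]$ is the function whose epigraph $\{(x,m)\in\mathbb R^N\times\mathbb R: f^\infty(x)\le m\}$ equals $(\operatorname{epi}f)^\infty$, where $\operatorname{epi}f=\{(x,m)\in\mathbb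 R^N\times\mathbb R: f(x)\le m\}$. A portfolio $x\in\mathbb R^N$ is a scalable acceptable deal if $x\in\mathcal P^\infty$, $V_0^\infty(x)\le0$ and $V_1(x)\in\mathcal A^\infty\setminus\{0\}$. Define $\mathcal L=\{x\in\mathcal P^\infty: V_0^\infty(x)\le0,\ V_1(x)\in\mathcal A^\infty\}$. *)

(* Defs.v *)
From HB Require Import structures.
From mathcomp Require Import all_boot all_order all_algebra.
From mathcomp Require Import all_classical all_reals all_analysis.
Set Implicit Arguments. Unset Strict Implicit. Unset Printing Implicit Defensive.
Import Order.TTheory GRing.Theory Num.Theory.
Local Open Scope classical_set_scope.
Local Open Scope ring_scope.

Definition directed_set (I : Type) (le : I -> I -> Prop) : Prop :=
  [/\ inhabited I, (forall i, le i i),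
      (forall i j k, le i j -> le j k -> le i k) &
      (forall i j, exists k, le i k /\ le j k)].

Definition net_cvg (T : topologicalType) (I : Type) (le : I -> I -> Prop)
  (x : I -> T) (p : T) : Prop :=
  forall U, nbhs p U -> exists i0, forall i, le i0 i -> U (x i).

Definition asym_cone (R : realType) (E : topologicalLmodType R) (C : set E) : set E :=
  [set X | exists (I : Type) (le : I -> I -> Prop) (Xa : I -> E) (la : I -> R),
     [/\ directed_set le, (forall i, C (Xa i)), (forall i, 0 <= la i),
         net_cvg le (la : I -> R^o) (0 : R^o) &
         net_cvg le (fun i => la i *: Xa i) X]].

Notation vecR R N := ('rV[R]_N).

Definition epi (R : realType) (N : nat) (f : vecR R N -> R) : set (vecR R N * R^o) :=
  [set xm | f xm.1 <= xm.2].

(** Asymptotic function f^oo : R^N -> [-oo, oo], the function whose epigraph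
    is (epi f)^oo, i.e. f^oo(x) = inf {m | (x, m) \in (epi f)^oo}. *)
Definition asym_fun (R : realType) (N : nat) (f : vecR R N -> R) (x : vecR R N) : \bar R :=
  ereal_inf [set (m%:E) | m in [set m : R | asym_cone (epi f) (x, (m : R^o))]].

Definition cone_ge (R : realType) (E : topologicalLmodType R) (Xp : set E) (X Y : E) : Prop :=
  Xp (X - Y).

Definition convex_cone (R : realType) (E : topologicalLmodType R) (Xp : set E) : Prop :=
  [/\ Xp 0, (forall X Y, Xp X -> Xp Y -> Xp (X + Y)) &
      (forall (l : R) X, 0 <= l -> Xp X -> Xp (l *: X))].

Definition scalable_acceptable_deal (R : realType) (E : topologicalLmodType R) (N : nat)
  (P : set (vecR R N)) (V0 : vecR R N -> R) (V1 : vecR R N -> E) (A : set E)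
  (x : vecR R N) : Prop :=
  [/\ asym_cone P x, (asym_fun V0 x <= 0)%E & (asym_cone A (V1 x) /\ V1 x <> 0)].

Definition Lset (R : realType) (E : topologicalLmodType R) (N : nat)
  (P : set (vecR R N)) (V0 : vecR R N -> R) (V1 : vecR R N -> E) (A : set E) : set (vecR R N) :=
  [set x | [/\ asym_cone P x, (asym_fun V0 x <= 0)%E & asym_cone A (V1 x)]].

Definition is_subspace (R : realType) (N : nat) (L : set (vecR R N)) : Prop :=
  [/\ L 0, (forall x y, L x -> L y -> L (x + y)) & (forall (a : R) x, L x -> L (a *: x))].

(* Main.v *)
Require Import Defs.
From HB Require Import structures.
From mathcomp Require Import all_boot all_order all_algebra.
From mathcomp Require Import all_classical all_reals all_analysis.
Import Order.TTheory GRing.Theory Num.Theory.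
Local Open Scope classical_set_scope.
Local Open Scope ring_scope.

Lemma nbhs_shift (R : realType) (E : topologicalLmodType R) (X k : E) (U : set E) :
  nbhs (X + k) U -> nbhs X (fun z => U (z + k)).
Proof.
move=> UXk; have := @add_continuous E (X, k) U; rewrite /= => /(_ UXk).
move=> [[B1 B2]] /= [B1X B2k] BU.
apply: filterS B1X => z Bz; apply: (BU (z, k)); split => //.
exact: nbhs_singleton.
Qed.

Lemma asym_add (R : realType) (E : topologicalLmodType R) (Xp A : set E) (X k : E) :
  convex_cone Xp -> (forall a k, A a -> Xp k -> A (a + k)) -> A 0 ->
  asym_cone A X -> Xp k -> asym_cone A (X + k).
Proof.
move=> [Xp0 XpD XpZ] HAX A0 [I [le [Xa [la [[[i0] lerefl letr ledir] HA Hla Hl0 HlX]]]]] Xpk.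
pose le' (p q : I * nat) := le p.1 q.1 /\ (p.2 <= q.2)%N.
pose la' (p : I * nat) : R := if 0 < la p.1 then la p.1 else harmonic p.2.
pose Xa' (p : I * nat) : E := if 0 < la p.1 then Xa p.1 + (la p.1)^-1 *: k
   else p.2.+1%:R *: k.
have key : forall p, la' p *: Xa' p = la p.1 *: Xa p.1 + k.
  move=> [i n]; rewrite /la' /Xa' /=; case: ifP => hp.
    by rewrite scalerDr scalerA mulfV ?scale1r // gt_eqF.
  have -> : la i = 0 by apply/eqP; rewrite eq_le Hla andbT leNgt hp.
  rewrite scale0r add0r scalerA /harmonic /= mulVf ?scale1r //.
exists (I * nat)%type, le', Xa', la'; split.
- split.
  + by constructor; exact: (i0, 0%N).
  + by move=> p; split.
  + move=> p q r [h1 h2] [h3 h4]; split; first exact: letr h1 h3.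
    exact: leq_trans h2 h4.
  + move=> [i n] [j m]; have [l [hil hjl]] := ledir i j.
    by exists (l, maxn n m); rewrite /le' /= leq_maxl leq_maxr.
- move=> [i n]; rewrite /Xa' /=; case: ifP => hp.
    apply: HAX; first exact: HA.
    by apply: XpZ => //; rewrite invr_ge0 ltW.
  by rewrite -[_ *: k]add0r; apply: HAX => //; apply: XpZ.
- move=> [i n]; rewrite /la' /=; case: ifP => hp; first exact: ltW.
  exact: harmonic_ge0.
- move=> U HU.
  have [j0 Hj0] := Hl0 U HU.
  have := @cvg_harmonic R U HU; case=> N _ HN.
  exists (j0, N) => [[i n]] [/= h1 h2]; rewrite /la' /=; case: ifP => _.
    exact: Hj0.
  exact: HN.
- move=> U HU.
  have [j0 Hj0] := HlX _ (@nbhs_shift _ _ _ _ _ HU).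
  exists (j0, 0%N) => p [h1 _]; rewrite key; exact: Hj0.
Qed.

Lemma asym0 (R : realType) (E : topologicalLmodType R) (C : set E) (p : E) :
  C p -> asym_cone C 0.
Proof.
move=> Cp; exists unit, (fun _ _ => True), (fun _ => p), (fun _ => 0 : R); split.
- by split => //; constructor; exact: tt.
- by [].
- by [].
- by move=> U HU; exists tt => _ _; exact: nbhs_singleton.
- by move=> U HU; exists tt => _ _; rewrite scale0r; exact: nbhs_singleton.
Qed.

Theorem mainTheorem7 (R : realType) (E : topologicalLmodType R) (Xp : set E) (N : nat)
  (P : set 'rV[R]_N) (V0 : 'rV[R]_N -> R) (V1 : 'rV[R]_N -> E) (A : set E) :
  convex_cone Xp ->
  P 0 ->
  V0 0 = 0 -> (forall x, V0 x >= - V0 (- x)) ->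
  V1 0 = 0 -> (forall x, cone_ge Xp (- V1 (- x)) (V1 x)) ->
  A 0 -> (forall a k, A a -> Xp k -> A (a + k)) ->
  let i_ := ~ (exists x, scalable_acceptable_deal P V0 V1 A x) in
  let ii_ := is_subspace (Lset P V0 V1 A) in
  let iii_ := Lset P V0 V1 A = [set 0] in
  [/\ (iii_ -> i_),
      ((forall x, V1 x = 0 -> x = 0) -> i_ -> iii_) &
      (asym_cone A `&` [set - X | X in asym_cone A] = [set 0] -> ii_ -> i_)].
Proof.
move=> cone P0 V00 _ V10 HV1 A0 HA i_ ii_ iii_.
have L0 : Lset P V0 V1 A 0.
  split.
  - exact: (@asym0 _ _ _ _ P0).
  - apply: ge_ereal_inf; exists 0%:E => //; exists 0 => //.
    have H : epi V0 (0, 0 : R^o) by rewrite /epi /= V00.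
    exact: (@asym0 _ _ _ _ H).
  - by rewrite V10; exact: (@asym0 _ _ _ _ A0).
split.
- rewrite /iii_ /i_ => h [x [Px Vx [Ax nz]]].
  have Lx : Lset P V0 V1 A x by split.
  by move: Lx; rewrite h => /= hx; apply: nz; rewrite hx V10.
- rewrite /iii_ /i_ => ker ni; apply/seteqP; split => x.
    move=> [Px Vx Ax]; case: (pselect (V1 x = 0)) => h; first exact: ker.
    by exfalso; apply: ni; exists x; split.
  by move=> /= ->.
- rewrite /ii_ /i_ => hA [L0' LD LZ] [x [Px Vx [Ax nz]]].
  have Lx : Lset P V0 V1 A x by split.
  have := LZ (-1) x Lx; rewrite scaleN1r => -[_ _ Anx].
  have Anx' : asym_cone A (- V1 x).
    have -> : - V1 x = V1 (- x) + (- V1 (- x) - V1 x).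
      by rewrite addrA subrr add0r.
    case: cone => Xp0 XpD XpZ.
    apply: (@asym_add _ _ Xp) => //; last exact: HV1.
  have : (asym_cone A `&` [set - X | X in asym_cone A]) (V1 x).
    by split => //; exists (- V1 x) => //; rewrite opprK.
  by rewrite hA.
Qed.
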